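(* Let $(\mathcal{A},\mathbb{W},\mathfrak{s})$ be a weakly extriangulated category with $\mathcal{A}$ essentially small. Then $\mathbf{def}\,\mathbb{W}=\mathbf{Eff}\,\mathbb{W}\cap\mathbf{coh}(\mathcal{A})$, and this subcategory is topologizing in $\mathbf{coh}(\mathcal{A})$ (closed under finite direct sums and subquotients). Consequently, if $\mathbb{W}'$ is an additive sub-bifunctor of $\mathbb{W}$ such that $(\mathcal{A},\mathbb{W}',\mathfrak{s}|_{\mathbb{W}'})$ is weakly extriangulated, then $\mathbf{def}\,\mathbb{W}'$ is a topologizing subcategory of $\mathbf{def}\,\mathbb{W}$.
   Context: $\mathrm{Mod}\,\mathcal{A}$ denotes the abelian category of right $\mathcal{A}$-modules (contravariant additive functors $\mathcal{A}^{op}\to\mathrm{Ab}$). A module is finitely presented if it is the cokernel of a morphism between representable functors $\mathrm{Hom}(-,X)$; it is coherent if it is finitely presented and every finitely generated submodule (image of a morphism from a representable functor) is finitely presented. $\mathbf{coh}(\mathcal{A})$ is the full (abelian, exactly embedded) subcategory of coherent modules. A full subcategory of an abelian category is topologizing if it is closed under finite direct sums and subquotients. A weakly extriangulated category $(\mathcal{A},\mathbb{W},\mathfrak{s})$ consists of an additive category $\mathcal{A}$, an additive bifunctor $\mathbb{W}:\mathcal{A}^{op}\times\mathcal{A}\to\mathrm{Ab}$ and an exact realization $\mathfrak{s}$ assigning to each $\delta\in\mathbb{W}(C,A)$ an equivalence class of weak kernel-cokernel pairs $A\to B\to C$ (satisfying the realization axioms (R0)-(R2) and the axioms (EA2), (EA2)$^{op}$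 of Herschend–Liu–Nakaoka 1-exangulated categories, but not the axiom on composition of inflations/deflations). A conflation is a representative $X\xrightarrow{f}Y\xrightarrow{g}Z$ of some $\mathfrak{s}(\delta)$; $g$ is a deflation. The contravariant defect of a conflation is $\mathrm{coker}(\mathrm{Hom}(-,g):\mathrm{Hom}(-,Y)\to\mathrm{Hom}(-,Z))$, and $\mathbf{def}\,\mathbb{W}$ is the full subcategory of modules isomorphic to defects of conflations. $F\in\mathrm{Mod}\,\mathcal{A}$ is weakly effaceable if for every $Z$ and $z\in F(Z)$ there is a deflation $g:Y\to Z$ with $F(g)(z)=0$; $\mathbf{Eff}\,\mathbb{W}$ is the full subcategory of such modules. *)

(* Defs.v *)
From HB Require Import structures.
From mathcomp Require Import all_boot all_algebra.
Set Implicit Arguments. Unset Strict Implicit. Unset Printing Implicit Defensive.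
Import GRing.Theory.
Local Open Scope ring_scope.

Record PreAddCat := {
  obj :> Type;
  hom : obj -> obj -> zmodType;
  comp : forall X Y Z : obj, hom Y Z -> hom X Y -> hom X Z;
  idm : forall X : obj, hom X X;
  compA : forall X Y Z V (h : hom Z V) (g : hom Y Z) (f : hom X Y),
      comp h (comp g f) = comp (comp h g) f;
  comp1m : forall X Y (f : hom X Y), comp (idm Y) f = f;
  compm1 : forall X Y (f : hom X Y), comp f (idm X) = f;
  compDl : forall X Y Z (g g' : hom Y Z) (f : hom X Y),
      comp (g + g') f = comp g f + comp g' f;
  compDr : forall X Y Z (g : hom Y Z) (f f' : hom X Y),
      comp g (f + f') = comp g f + comp g f'
}.
Arguments hom {_}.
Arguments comp {_ X Y Z}.
Arguments idm {_}.

Section Cat.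
Variable C : PreAddCat.

Definition is_zero_obj (Z : C) := idm Z = 0.

Definition is_biprod (X Y S : C) (i1 : hom X S) (i2 : hom Y S)
    (p1 : hom S X) (p2 : hom S Y) :=
  [/\ comp p1 i1 = idm X, comp p2 i2 = idm Y, comp p1 i2 = 0,
      comp p2 i1 = 0 & comp i1 p1 + comp i2 p2 = idm S].

Definition is_additive :=
  (exists Z : C, is_zero_obj Z) /\
  forall X Y : C, exists (S : C) (i1 : hom X S) (i2 : hom Y S)
    (p1 : hom S X) (p2 : hom S Y), is_biprod i1 i2 p1 p2.

Lemma compBl_aux (X Y Z : C) (g g' : hom Y Z) (f : hom X Y) :
  comp (g - g') f = comp g f - comp g' f.
Proof. by apply/eqP; rewrite eq_sym subr_eq -compDl subrK. Qed.

Record Module := {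
  mob : C -> zmodType;
  mact : forall X Y : C, hom X Y -> mob Y -> mob X;
  mactB : forall X Y (f : hom X Y) (y y' : mob Y),
      mact f (y - y') = mact f y - mact f y';
  mactDf : forall X Y (f f' : hom X Y) (y : mob Y),
      mact (f + f') y = mact f y + mact f' y;
  mact1 : forall X (x : mob X), mact (idm X) x = x;
  mactM : forall X Y Z (g : hom Y Z) (f : hom X Y) (z : mob Z),
      mact (comp g f) z = mact f (mact g z)
}.
Arguments mact m {X Y} : rename.

Record ModMor (M N : Module) := {
  tr : forall X : C, mob M X -> mob N X;
  trB : forall X (x y : mob M X), tr (x - y) = tr x - tr y;
  trN : forall X Y (f : hom X Y) (y : mob M Y),
      tr (mact M f y) = mact N f (tr y)
}.
Arguments tr {M N} m X : rename.

Definition mono (M N : Module) (p : ModMor M N) :=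
  forall X : C, injective (tr p X).
Definition epi (M N : Module) (p : ModMor M N) :=
  forall (X : C) (y : mob N X), exists x, tr p X x = y.

Definition Rep (Y : C) : Module :=
  {| mob := fun X => hom X Y;
     mact := fun X Z (f : hom X Z) (h : hom Z Y) => comp h f;
     mactB := fun X Z f h h' => compBl_aux h h' f;
     mactDf := fun X Z f f' h => compDr h f f';
     mact1 := fun X h => compm1 h;
     mactM := fun X Z V g f h => compA h g f |}.

Definition mimage (M N : Module) (p : ModMor M N) : forall X : C, mob N X -> Prop :=
  fun X y => exists x, tr p X x = y.

(* The submodule N of M (given by its underlying subsets) is finitely
   presented: there is an epimorphism Hom(-,Y) ->> N (i.e. a morphism
   Hom(-,Y) -> M with image N) whose kernel is the image of Hom(-,f) for some
   f : Y' -> Y, i.e. N = coker Hom(-,f) up to isomorphism. *)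
Definition fp_sub (M : Module) (N : forall X : C, mob M X -> Prop) :=
  exists (Y Y' : C) (f : hom Y' Y) (p : ModMor (Rep Y) M),
    (forall X (x : mob M X), N X x <-> exists h : hom X Y, tr p X h = x) /\
    (forall (X : C) (h : hom X Y), tr p X h = 0 <-> exists k : hom X Y', h = comp f k).

Definition fin_pres (M : Module) := @fp_sub M (fun _ _ => True).

(* coherent: finitely presented and every finitely generated submodule
   (image of a morphism from a representable functor) is finitely presented *)
Definition coherent (M : Module) :=
  fin_pres M /\ forall (X : C) (q : ModMor (Rep X) M), fp_sub (mimage q).

Definition dsum_mob (M N : Module) (X : C) : zmodType := (mob M X * mob N X)%type.

Lemma dsum_mactB (M N : Module) X Y (f : hom X Y) (y y' : dsum_mob M N Y) :
  (mact M f (y - y').1, mact N f (y - y').2)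
  = ((mact M f y.1, mact N f y.2) - (mact M f y'.1, mact N f y'.2) : dsum_mob M N X).
Proof. by rewrite /= !mactB. Qed.

Lemma dsum_mactDf (M N : Module) X Y (f f' : hom X Y) (y : dsum_mob M N Y) :
  (mact M (f + f') y.1, mact N (f + f') y.2)
  = ((mact M f y.1, mact N f y.2) + (mact M f' y.1, mact N f' y.2) : dsum_mob M N X).
Proof. by rewrite !mactDf. Qed.

Lemma dsum_mact1 (M N : Module) X (x : dsum_mob M N X) :
  (mact M (idm X) x.1, mact N (idm X) x.2) = x.
Proof. by rewrite !mact1; case: x. Qed.

Lemma dsum_mactM (M N : Module) X Y Z (g : hom Y Z) (f : hom X Y) (z : dsum_mob M N Z) :
  (mact M (comp g f) z.1, mact N (comp g f) z.2)
  = (mact M f (mact M g z.1, mact N g z.2).1, mact N f (mact M g z.1, mact N g z.2).2).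
Proof. by rewrite !mactM. Qed.

Definition dsum (M N : Module) : Module :=
  {| mob := dsum_mob M N;
     mact := fun X Y (f : hom X Y) (y : dsum_mob M N Y) =>
               ((mact M f y.1, mact N f y.2) : dsum_mob M N X);
     mactB := @dsum_mactB M N;
     mactDf := @dsum_mactDf M N;
     mact1 := @dsum_mact1 M N;
     mactM := @dsum_mactM M N |}.

Definition is_zero_mod (M : Module) := forall (X : C) (x : mob M X), x = 0.

(* S is a topologizing subcategory of the (exactly embedded, abelian) full
   subcategory Amb of Mod C: S is contained in Amb, closed under finite direct
   sums (zero module and binary sums) and under subquotients taken in Amb
   (Q a quotient of a subobject L of M, with L, Q in Amb). *)
Definition topologizing (S Amb : Module -> Prop) :=
  [/\ (forall M, S M -> Amb M),
      (forall M, Amb M -> is_zero_mod M -> S M),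
      (forall M N, S M -> S N -> S (dsum M N)) &
      (forall (M L Q : Module) (i : ModMor L M) (q : ModMor L Q),
          S M -> Amb L -> Amb Q -> mono i -> epi q -> S Q)].

Record ExtBifun := {
  ext : C -> C -> zmodType;                                  (* ext Z X = W(Z, X) *)
  pushf : forall X X' Z : C, hom X X' -> ext Z X -> ext Z X';
  pullb : forall Z' Z X : C, hom Z' Z -> ext Z X -> ext Z' X;
  pushfB : forall X X' Z (a : hom X X') (d d' : ext Z X),
      pushf a (d - d') = pushf a d - pushf a d';
  pullbB : forall Z' Z X (c : hom Z' Z) (d d' : ext Z X),
      pullb c (d - d') = pullb c d - pullb c d';
  pushfD : forall X X' Z (a a' : hom X X') (d : ext Z X),
      pushf (a + a') d = pushf a d + pushf a' d;
  pullbD : forall Z' Z X (c c' : hom Z' Z) (d : ext Z X),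
      pullb (c + c') d = pullb c d + pullb c' d;
  pushf1 : forall X Z (d : ext Z X), pushf (idm X) d = d;
  pullb1 : forall Z X (d : ext Z X), pullb (idm Z) d = d;
  pushfM : forall X X' X'' Z (a' : hom X' X'') (a : hom X X') (d : ext Z X),
      pushf (comp a' a) d = pushf a' (pushf a d);
  pullbM : forall Z'' Z' Z X (c : hom Z' Z) (c' : hom Z'' Z') (d : ext Z X),
      pullb (comp c c') d = pullb c' (pullb c d);
  push_pull : forall X X' Z' Z (a : hom X X') (c : hom Z' Z) (d : ext Z X),
      pushf a (pullb c d) = pullb c (pushf a d)
}.

Section Extri.
Variable W : ExtBifun.
(* the realization s: [s d f g] means that A -f-> B -g-> D is a representative
   of the class s(d), for d in W(D, A) *)
Variable s : forall A B D : C, ext W D A -> hom A B -> hom B D -> Prop.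
(* P selects the extensions of an (additive sub-)bifunctor W' of W; the data
   (C, W', s|W') is then described by (W, s, P). *)
Variable P : forall D A : C, ext W D A -> Prop.

Definition sub_bifun :=
  [/\ (forall D A : C, P (0 : ext W D A)),
      (forall D A (d d' : ext W D A), P d -> P d' -> P (d - d')),
      (forall D A A' (a : hom A A') (d : ext W D A), P d -> P (pushf a d)) &
      (forall D' D A (c : hom D' D) (d : ext W D A), P d -> P (pullb c d))].

Definition all_ext : forall D A : C, ext W D A -> Prop := fun _ _ _ => True.

Definition wkcp (A B D : C) (f : hom A B) (g : hom B D) :=
  [/\ comp g f = 0,
      (forall (X : C) (h : hom X B), comp g h = 0 -> exists k : hom X A, h = comp f k) &
      (forall (X : C) (h : hom B X), comp h f = 0 -> exists k : hom D X, h = comp k g)].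

Definition seq_equiv (A B B' D : C) (f : hom A B) (g : hom B D) (f' : hom A B') (g' : hom B' D) :=
  exists (b : hom B B') (b' : hom B' B),
    [/\ comp b' b = idm B, comp b b' = idm B', comp b f = f' & comp g' b = g].

Definition exangle (A B D : C) (f : hom A B) (g : hom B D) (d : ext W D A) :=
  [/\ comp g f = 0,
      (forall (X : C) (h : hom X B), comp g h = 0 -> exists k : hom X A, h = comp f k),
      (forall (X : C) (h : hom X D), pullb h d = 0 <-> exists k : hom X B, h = comp g k),
      (forall (X : C) (h : hom B X), comp h f = 0 -> exists k : hom D X, h = comp k g) &
      (forall (X : C) (h : hom A X), pushf h d = 0 <-> exists k : hom B X, h = comp k f)].

(* s assigns to each d an equivalence class of weak kernel-cokernel pairs *)
Definition realization_ax :=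
  forall (A D : C) (d : ext W D A), P d ->
    (exists (B : C) (f : hom A B) (g : hom B D), s d f g) /\
    (forall (B : C) (f : hom A B) (g : hom B D), s d f g ->
       wkcp f g /\
       forall (B' : C) (f' : hom A B') (g' : hom B' D), s d f' g' <-> seq_equiv f g f' g').

Definition R0 :=
  forall (A D A' D' : C) (d : ext W D A) (d' : ext W D' A') (a : hom A A') (c : hom D D'),
    P d -> P d' -> pushf a d = pullb c d' ->
    forall (B B' : C) (f : hom A B) (g : hom B D) (f' : hom A' B') (g' : hom B' D'),
      s d f g -> s d' f' g' ->
      exists b : hom B B', comp b f = comp f' a /\ comp c g = comp g' b.

Definition R1 :=
  forall (A B D : C) (d : ext W D A) (f : hom A B) (g : hom B D),
    P d -> s d f g -> exangle f g d.

Definition R2 :=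
  forall Z : C, is_zero_obj Z -> forall A : C,
    s (0 : ext W Z A) (idm A) (0 : hom A Z) /\ s (0 : ext W A Z) (0 : hom Z A) (idm A).

(* (EA2): the morphism (1_A, b, c) is a good lift: its mapping cone
   B --[-g'; b]--> C (+) E --[c, g]--> D with extension f'_* d is a 1-exangle *)
Definition EA2 :=
  forall (A D D0 : C) (d : ext W D A) (c : hom D0 D), P d ->
  forall (B E : C) (f' : hom A B) (g' : hom B D0) (f : hom A E) (g : hom E D),
    s (pullb c d) f' g' -> s d f g ->
    exists b : hom B E, [/\ comp b f' = f, comp g b = comp c g' &
      forall (S : C) (i1 : hom D0 S) (i2 : hom E S) (p1 : hom S D0) (p2 : hom S E),
        is_biprod i1 i2 p1 p2 ->
        exangle (comp i1 (- g') + comp i2 b) (comp c p1 + comp g p2) (pushf f' d)].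

Definition EA2op :=
  forall (A D B : C) (d : ext W D A) (a : hom A B), P d ->
  forall (E Cc : C) (f' : hom B E) (g' : hom E D) (f : hom A Cc) (g : hom Cc D),
    s (pushf a d) f' g' -> s d f g ->
    exists b : hom Cc E, [/\ comp b f = comp f' a, comp g' b = g &
      forall (S : C) (i1 : hom B S) (i2 : hom Cc S) (p1 : hom S B) (p2 : hom S Cc),
        is_biprod i1 i2 p1 p2 ->
        exangle (comp i1 a + comp i2 f) (comp (- f') p1 + comp b p2) (pullb g' d)].

Definition weakly_extri := [/\ realization_ax, R0, R1, R2 & EA2 /\ EA2op].

Definition deflation (B D : C) (g : hom B D) :=
  exists (A : C) (f : hom A B) (d : ext W D A), P d /\ s d f g.

(* M is isomorphic to coker Hom(-, g) *)
Definition is_defect_of (M : Module) (B D : C) (g : hom B D) :=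
  exists p : ModMor (Rep D) M, epi p /\
    forall (X : C) (h : hom X D), tr p X h = 0 <-> exists k : hom X B, h = comp g k.

Definition defW (M : Module) :=
  exists (A B D : C) (d : ext W D A) (f : hom A B) (g : hom B D),
    [/\ P d, s d f g & is_defect_of M g].

Definition Eff (M : Module) :=
  forall (Z : C) (z : mob M Z), exists (Y : C) (g : hom Y Z),
    deflation g /\ mact M g z = 0.

End Extri.
End Cat.

(* Main.v *)
From Pilot Require Import Defs.
From mathcomp Require Import ssreflect ssrfun ssrbool eqtype ssralg.
Import Pilot.Defs.
Set Implicit Arguments. Unset Strict Implicit. Unset Printing Implicit Defensive.
Import GRing.Theory.
Local Open Scope ring_scope.

Section Helpers.
Variable C : PreAddCat.

Lemma comp0l (X Y Z : C) (f : hom X Y) : comp (0 : hom Y Z) f = 0.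
Proof. by apply: (addrI (comp (0 : hom Y Z) f)); rewrite -compDl !addr0. Qed.
Lemma comp0r (X Y Z : C) (g : hom Y Z) : comp g (0 : hom X Y) = 0.
Proof. by apply: (addrI (comp g (0 : hom X Y))); rewrite -compDr !addr0. Qed.

Lemma compBr (X Y Z : C) (g : hom Y Z) (f f' : hom X Y) :
  comp g (f - f') = comp g f - comp g f'.
Proof. by apply/eqP; rewrite eq_sym subr_eq -compDr subrK. Qed.

Lemma tr0 (M N : Module C) (p : ModMor M N) X : tr p (0 : mob M X) = 0.
Proof. by rewrite -(subrr (0 : mob M X)) trB subrr. Qed.

Lemma mact0 (M : Module C) (X Y : C) (f : hom X Y) : mact f (0 : mob M Y) = 0.
Proof. by rewrite -(subrr (0 : mob M Y)) mactB subrr. Qed.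

Lemma repE (M : Module C) (X : C) (q : ModMor (Rep X) M) (Y : C) (h : hom Y X) :
  tr q h = mact h (tr q (idm X)).
Proof. by rewrite -trN /= comp1m. Qed.

Variable W : ExtBifun C.

Lemma pullb0 Z' Z X (c : hom Z' Z) : pullb c (0 : ext W Z X) = 0.
Proof. by rewrite -(subrr (0 : ext W Z X)) pullbB subrr. Qed.
Lemma pullbN Z' Z X (c : hom Z' Z) (d : ext W Z X) : pullb c (- d) = - pullb c d.
Proof. have -> : - d = 0 - d by rewrite sub0r. by rewrite pullbB pullb0 sub0r. Qed.
Lemma pullbDd Z' Z X (c : hom Z' Z) (d d' : ext W Z X) :
  pullb c (d + d') = pullb c d + pullb c d'.
Proof. by rewrite -{1}[d']opprK pullbB pullbN opprK. Qed.
Lemma pushf0 X X' Z (a : hom X X') : pushf a (0 : ext W Z X) = 0.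
Proof. by rewrite -(subrr (0 : ext W Z X)) pushfB subrr. Qed.
Lemma pushfN X X' Z (a : hom X X') (d : ext W Z X) : pushf a (- d) = - pushf a d.
Proof. have -> : - d = 0 - d by rewrite sub0r. by rewrite pushfB pushf0 sub0r. Qed.
Lemma pushfDd X X' Z (a : hom X X') (d d' : ext W Z X) :
  pushf a (d + d') = pushf a d + pushf a d'.
Proof. by rewrite -{1}[d']opprK pushfB pushfN opprK. Qed.
Lemma pushf0f X X' Z (d : ext W Z X) : pushf (0 : hom X X') d = 0.
Proof. by apply: (addrI (pushf (0 : hom X X') d)); rewrite -pushfD !addr0. Qed.

End Helpers.

Section Gen.
Variables (C : PreAddCat) (W : ExtBifun C)
  (s : forall A B D : C, ext W D A -> hom A B -> hom B D -> Prop)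
  (P : forall D A : C, ext W D A -> Prop).
Hypotheses (Hadd : is_additive C) (HP : sub_bifun P) (Hwe : weakly_extri s P).

Lemma P_pull D' D A (c : hom D' D) (d : ext W D A) : P d -> P (pullb c d).
Proof. by case: HP => _ _ _; apply. Qed.
Lemma P_push D A A' (a : hom A A') (d : ext W D A) : P d -> P (pushf a d).
Proof. by case: HP => _ _ + _; apply. Qed.
Lemma P_add D A (d d' : ext W D A) : P d -> P d' -> P (d + d').
Proof.
case: HP => H0 HBm _ _ Pd Pd'.
have -> : d + d' = d - (0 - d') by rewrite sub0r opprK.
by apply: (HBm) => //; apply: (HBm).
Qed.
Lemma P0 D A : P (0 : ext W D A).
Proof. by case: HP. Qed.

Lemma real_ex A D (d : ext W D A) : P d -> exists B (f : hom A B) (g : hom B D), s d f g.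
Proof. by case: Hwe => Hr _ _ _ _ Pd; case: (Hr _ _ _ Pd). Qed.

Lemma exa A B D (d : ext W D A) (f : hom A B) (g : hom B D) :
  P d -> s d f g -> exangle f g d.
Proof. by case: Hwe => _ _ H1 _ _; apply: H1. Qed.

Lemma pullb_fact A B D (d : ext W D A) (f : hom A B) (g : hom B D) :
  P d -> s d f g -> forall X (h : hom X D), pullb h d = 0 <-> exists k : hom X B, h = comp g k.
Proof. by move=> Pd sd; case: (exa Pd sd). Qed.

Lemma defW_coherent M : defW s P M -> coherent M.
Proof.
case=> A [B [D [d [f [g [Pd sd [p [pep pker]]]]]]]].
split.
  by exists D, B, g, p; split => // X x; split => // _; exact: pep.
move=> X q; exists X.
case: (pep X (tr q (idm X))) => u hu.
case: (real_ex (P_pull u Pd)) => E [f' [g' sd']].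
exists E, g', q; split => // X' h.
rewrite repE -hu -trN /=.
apply: iff_trans (pker _ _) _.
have H1 := pullb_fact Pd sd (comp u h).
have H2 := pullb_fact (P_pull u Pd) sd' h.
rewrite pullbM in H1; tauto.
Qed.

Lemma defW_Eff M : defW s P M -> Eff s P M.
Proof.
case=> A [B [D [d [f [g [Pd sd [p [pep pker]]]]]]]].
move=> Z z; case: (pep Z z) => u <-.
case: (real_ex (P_pull u Pd)) => E [f' [g' sd']].
exists E, g'; split; first by exists A, f', (pullb u d); split => //; exact: P_pull.
rewrite -trN /=; apply/pker; apply/(pullb_fact Pd sd).
rewrite pullbM; apply/(pullb_fact (P_pull u Pd) sd').
by exists (idm E); rewrite compm1.
Qed.

Lemma EA2_of : EA2 s P.
Proof. by case: Hwe => _ _ _ _ []. Qed.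

Lemma Eff_fp_defW M : Eff s P M -> fin_pres M -> defW s P M.
Proof.
move=> Heff [Y [Y' [f [p [pim pker]]]]].
case: (Heff Y (tr p (idm Y))) => E [g [[A0 [fA [d [Pd sd]]]] hg]].
have : tr p g = 0 by rewrite repE.
case/pker => k0 hk0.
case: (real_ex (P_pull f Pd)) => B [f' [g' sd']].
case: (EA2_of Pd sd' sd) => b [_ _ Hex].
case: Hadd => _ /(_ Y' E) [S [i1 [i2 [p1 [p2 Hb]]]]].
have [_ _ Hx3 _ _] := Hex S i1 i2 p1 p2 Hb.
case: Hb => Hb1 Hb2 Hb3 Hb4 Hb5.
have Pe := P_push f' Pd.
case: (real_ex Pe) => E2 [f2 [g2 s2]].
exists B, E2, Y, (pushf f' d), f2, g2; split => //.
exists p; split.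
  by move=> X y; case: (pim X y) => /(_ I).
move=> X h; apply: iff_trans (pker X h) _; split.
  case=> k ->; apply/(pullb_fact Pe s2); apply/Hx3.
  exists (comp i1 k); rewrite compA compDl -!compA Hb1 Hb4 comp0r compm1.
  by rewrite addr0.
move/(pullb_fact Pe s2)/Hx3 => [k ->].
exists (comp p1 k + comp k0 (comp p2 k)).
by rewrite compDr compDl hk0 -!compA.
Qed.

Lemma defW_dsum M N : defW s P M -> defW s P N -> defW s P (dsum M N).
Proof.
case=> A1 [B1 [D1 [d1 [f1 [g1 [Pd1 sd1 [pM [pMe pMk]]]]]]]].
case=> A2 [B2 [D2 [d2 [f2 [g2 [Pd2 sd2 [pN [pNe pNk]]]]]]]].
case: Hadd => _ Hbi.
case: (Hbi A1 A2) => SA [ia1 [ia2 [pa1 [pa2 [Ha1 Ha2 Ha3 Ha4 Ha5]]]]].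
case: (Hbi D1 D2) => SD [id1 [id2 [pd1 [pd2 [Hd1 Hd2 Hd3 Hd4 Hd5]]]]].
pose e := pushf ia1 (pullb pd1 d1) + pushf ia2 (pullb pd2 d2).
have Pe : P e by apply: P_add; apply: P_push; apply: P_pull.
case: (real_ex Pe) => E [fe [ge se]].
have key : forall X (h : hom X SD), pullb h e = 0 <->
    pullb (comp pd1 h) d1 = 0 /\ pullb (comp pd2 h) d2 = 0.
  move=> X h; rewrite /e pullbDd -!push_pull -!pullbM; split; last first.
    by case=> -> ->; rewrite !pushf0 addr0.
  move=> H; split.
    have := congr1 (pushf pa1) H.
    by rewrite pushfDd -!pushfM Ha1 Ha3 pushf1 pushf0f addr0 pushf0.
  have := congr1 (pushf pa2) H.
  by rewrite pushfDd -!pushfM Ha2 Ha4 pushf1 pushf0f add0r pushf0.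
exists SA, E, SD, e, fe, ge; split => //.
have trB' : forall X (x y : mob (Rep SD) X),
  ((tr pM (comp pd1 (x - y)), tr pN (comp pd2 (x - y))) : mob (dsum M N) X) =
  (tr pM (comp pd1 x), tr pN (comp pd2 x)) - (tr pM (comp pd1 y), tr pN (comp pd2 y)).
  by move=> X x y; rewrite !compBr !trB.
have trN' : forall X Y (f : hom X Y) (y : mob (Rep SD) Y),
  ((tr pM (comp pd1 (mact f y)), tr pN (comp pd2 (mact f y))) : mob (dsum M N) X) =
  mact f ((tr pM (comp pd1 y), tr pN (comp pd2 y)) : mob (dsum M N) Y).
  move=> X Y f y /=; rewrite !compA; congr pair.
    exact: (trN pM f (comp pd1 y)).
  exact: (trN pN f (comp pd2 y)).
exists (@Build_ModMor C (Rep SD) (dsum M N)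
   (fun X h => ((tr pM (comp pd1 h), tr pN (comp pd2 h)) : mob (dsum M N) X)) trB' trN').
split.
  move=> X [x y]; case: (pMe X x) => u hu; case: (pNe X y) => v hv.
  exists (comp id1 u + comp id2 v) => /=.
  rewrite !compDr !compA Hd1 Hd2 Hd3 Hd4 !comp0l addr0 add0r !comp1m.
  by rewrite hu hv.
move=> X h /=; split.
  move=> H.
  have H1 : tr pM (comp pd1 h) = 0 := congr1 fst H.
  have H2 : tr pN (comp pd2 h) = 0 := congr1 snd H.
  apply/(pullb_fact Pe se); apply/key; split.
    by apply/(pullb_fact Pd1 sd1); apply/pMk.
  by apply/(pullb_fact Pd2 sd2); apply/pNk.
move/(pullb_fact Pe se)/key => [H1 H2].
have -> : tr pM (comp pd1 h) = 0 by apply/pMk; apply/(pullb_fact Pd1 sd1).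
by have -> : tr pN (comp pd2 h) = 0 by apply/pNk; apply/(pullb_fact Pd2 sd2).
Qed.

Lemma zero_defW M : is_zero_mod M -> defW s P M.
Proof.
move=> hz.
case: Hadd => [[Z hZ] _].
case: Hwe => _ _ _ H2 _.
case: (H2 Z hZ Z) => sZ _.
exists Z, Z, Z, 0, (idm Z), 0; split => //; first exact: P0.
have trB0 : forall X (x y : mob (Rep Z) X), (0 : mob M X) = 0 - 0.
  by move=> X x y; rewrite subrr.
have trN0 : forall X Y (f : hom X Y) (y : mob (Rep Z) Y), (0 : mob M X) = mact f 0.
  by move=> X Y f y; rewrite mact0.
exists (@Build_ModMor C (Rep Z) M (fun X h => 0) trB0 trN0); split.
  by move=> X y; exists 0; rewrite (hz _ y).
move=> X h /=; split => // _; exists h.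
by rewrite -hZ comp1m.
Qed.

End Gen.

Lemma Eff_subq (C : PreAddCat) (W : ExtBifun C)
  (s : forall A B D : C, ext W D A -> hom A B -> hom B D -> Prop)
  (P : forall D A : C, ext W D A -> Prop) (M L Q : Module C)
  (i : ModMor L M) (q : ModMor L Q) :
  Eff s P M -> mono i -> epi q -> Eff s P Q.
Proof.
move=> HM Hi Hq Z z; case: (Hq Z z) => l <-.
case: (HM Z (tr i l)) => Y [g [Hg H0]].
exists Y, g; split => //.
rewrite -trN.
have -> : mact g l = 0 by apply: Hi; rewrite trN H0 tr0.
exact: tr0.
Qed.

Lemma all_sub (C : PreAddCat) (W : ExtBifun C) : sub_bifun (@all_ext C W).
Proof. by []. Qed.

Theorem mainTheorem14 (C : PreAddCat) (W : ExtBifun C)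
  (s : forall A B D : C, ext W D A -> hom A B -> hom B D -> Prop) :
  is_additive C ->
  weakly_extri s (@all_ext C W) ->
  (forall M : Module C,
     defW s (@all_ext C W) M <-> Eff s (@all_ext C W) M /\ coherent M) /\
  topologizing (defW s (@all_ext C W)) (@coherent C) /\
  (forall P' : forall D A : C, ext W D A -> Prop,
     sub_bifun P' -> weakly_extri s P' ->
     topologizing (defW s P') (defW s (@all_ext C W))).
Proof.
move=> Hadd Hwe.
have HA := all_sub W.
split.
  move=> M; split.
    by move=> H; split; [exact: (defW_Eff HA Hwe) | exact: (defW_coherent HA Hwe)].
  by case=> H1 [H2 _]; exact: (Eff_fp_defW Hadd HA Hwe H1 H2).
split.
  split.
  - by move=> M; exact: (defW_coherent HA Hwe).
  - by move=> M _; exact: (zero_defW Hadd HA Hwe).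
  - by move=> M N; exact: (defW_dsum Hadd HA Hwe).
  - move=> M L Q i q HM _ [HQ _] Hi Hq.
    exact: (Eff_fp_defW Hadd HA Hwe (Eff_subq (defW_Eff HA Hwe HM) Hi Hq) HQ).
move=> P' HP' Hwe'; split.
- move=> M [A [B [D [d [f [g [_ sd hd]]]]]]].
  by exists A, B, D, d, f, g.
- by move=> M _; exact: (zero_defW Hadd HP' Hwe').
- by move=> M N; exact: (defW_dsum Hadd HP' Hwe').
- move=> M L Q i q HM _ HQ Hi Hq.
  have [HQf _] := defW_coherent HA Hwe HQ.
  exact: (Eff_fp_defW Hadd HP' Hwe' (Eff_subq (defW_Eff HP' Hwe' HM) Hi Hq) HQf).
Qed.
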